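(* Fix $\alpha\in(0,1)$ and $L\in\mathbb{N}$. Every $f\in\mathcal{N}_1(L)$ is an $\alpha$-power piecewise linear function with at most $L+1$ linear pieces.
   Context: Leaky-ReLU: $\sigma_\alpha(x)=\max(\alpha x,x)$. $\mathcal{N}_1(L)$ is the set of functions $f_L:\mathbb{R}\to\mathbb{R}$ with $f_0(x)=w_0x+b_0$, $f_k(x)=w_k\sigma_\alpha(f_{k-1}(x))+b_k$ ($k=1,\dots,L$), $w_k,b_k\in\mathbb{R}$. A piecewise linear (PL) function is a continuous function $g:\mathbb{R}\to\mathbb{R}$ which is affine on each of finitely many intervals partitioning $\mathbb{R}$ (separated by finitely many breakpoints). A PL function $g$ is called $\alpha$-power PL if there is a constant $c\in\mathbb{R}$ such that the slope of every linear piece of $g$ lies in $\{c\alpha^k: k\in\mathbb{Z}\}$. *)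

(* Defs.v *)
From Stdlib Require Import Reals Lra Lia List.
Open Scope R_scope.

Definition leaky (alpha x : R) : R := Rmax (alpha * x) x.

Fixpoint net (alpha : R) (w b : nat -> R) (k : nat) (x : R) : R :=
  match k with
  | O => w O * x + b O
  | S k' => w (S k') * leaky alpha (net alpha w b k' x) + b (S k')
  end.

Definition N1 (alpha : R) (L : nat) (f : R -> R) : Prop :=
  exists w b : nat -> R, forall x, f x = net alpha w b L x.

(* Breakpoints bs = [t_0 < ... < t_(n-1)] cut R into n+1 pieces:
   piece 0 = (-oo, t_0], piece i = [t_(i-1), t_i], piece n = [t_(n-1), +oo). *)
Definition strictly_increasing (bs : list R) : Prop :=
  forall i, (S i < length bs)%nat -> nth i bs 0 < nth (S i) bs 0.

Definition in_piece (bs : list R) (i : nat) (x : R) : Prop :=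
  (i = O \/ nth (i - 1) bs 0 <= x) /\ (i = length bs \/ x <= nth i bs 0).

Definition PL_repr (g : R -> R) (bs : list R) (s c : nat -> R) : Prop :=
  continuity g /\ strictly_increasing bs /\
  forall i x, (i <= length bs)%nat -> in_piece bs i x -> g x = s i * x + c i.

Definition alpha_power_PL_at_most (alpha : R) (m : nat) (g : R -> R) : Prop :=
  exists (bs : list R) (s c : nat -> R),
    PL_repr g bs s c /\ (length bs + 1 <= m)%nat /\
    exists c0 : R, forall i, (i <= length bs)%nat ->
      exists k : Z, s i = c0 * powerRZ alpha k.

(* Main.v *)
Require Import Defs.
From Stdlib Require Import Reals Lra Lia List Sorted Classical ClassicalEpsilon FunctionalExtensionality.
Open Scope R_scope.

Lemma Rmax_abs a b : Rmax a b = (a + b + Rabs (a - b)) / 2.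
Proof. unfold Rmax, Rabs. destruct (Rle_dec a b); destruct (Rcase_abs (a-b)); lra. Qed.

Lemma cont_step alpha w b g : continuity g ->
  continuity (fun x => w * leaky alpha (g x) + b).
Proof.
  intros Hg x.
  apply continuity_pt_locally_ext with (a:=1)
    (f := (fct_cte w * (mult_real_fct (/2) ((mult_real_fct alpha g + g) + comp Rabs (mult_real_fct alpha g - g))) + fct_cte b)%F).
  lra.
  intros y _. unfold leaky. rewrite Rmax_abs.
  unfold fct_cte, mult_fct, plus_fct, mult_real_fct, minus_fct, comp. field.
  apply continuity_pt_plus; [|apply continuity_pt_const; intros ??; reflexivity].
  apply continuity_pt_mult; [apply continuity_pt_const; intros ??; reflexivity|].
  apply continuity_pt_scal. apply continuity_pt_plus.
  apply continuity_pt_plus; [apply continuity_pt_scal; apply Hg | apply Hg].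
  apply continuity_pt_comp. apply continuity_pt_minus; [apply continuity_pt_scal; apply Hg | apply Hg].
  apply Rcontinuity_abs.
Qed.

Lemma cont_net alpha w b L : continuity (net alpha w b L).
Proof.
  induction L; simpl.
  - intros x. apply continuity_pt_locally_ext with (a:=1)
      (f := (fct_cte (w O) * id + fct_cte (b O))%F). lra.
    intros; unfold fct_cte, mult_fct, plus_fct, id; reflexivity.
    apply continuity_pt_plus; [apply continuity_pt_mult|]; try (apply continuity_pt_const; intros ??; reflexivity).
    apply derivable_continuous_pt, derivable_pt_id.
  - apply (cont_step alpha (w (S L)) (b (S L))). exact IHL.
Qed.

Definition PLE (alpha : R) (m : nat) (g : R -> R) : Prop :=
  exists (T : list R) (c0 : R), (length T + 1 <= m)%nat /\
   forall x y, x < y -> (forall t, In t T -> ~ (x < t < y)) ->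
     exists k c, forall z, x <= z <= y -> g z = c0 * powerRZ alpha k * z + c.

Definition cnt (T : list R) x y := length (filter (fun t => if Rlt_dec x t then if Rlt_dec t y then true else false else false) T).

Lemma filter_lt {A} (p q : A -> bool) (l : list A) :
  (forall a, p a = true -> q a = true) -> (length (filter p l) <= length (filter q l))%nat /\
  ((exists a, In a l /\ q a = true /\ p a = false) -> (length (filter p l) < length (filter q l))%nat).
Proof.
  intros H. induction l as [|a l IH]; simpl.
  - split; [lia| intros [? [[] _]]].
  - destruct IH as [IH1 IH2].
    destruct (p a) eqn:Ep; [rewrite (H a Ep)|]; destruct (q a) eqn:Eq; simpl; split; try lia;
    intros [a' [[<-|Hi] [Hq Hp]]]; try congruence;
    specialize (IH2 (ex_intro _ a' (conj Hi (conj Hq Hp)))); lia.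
Qed.

Lemma filter_nil' {A} (p : A -> bool) l : (forall a, In a l -> p a = false) -> filter p l = nil.
Proof. induction l; simpl; auto. intros H. rewrite H by auto. apply IHl; auto. Qed.

Lemma mono alpha T c0 g : 0 < alpha -> c0 <> 0 ->
  (forall x y, x < y -> (forall t, In t T -> ~ (x < t < y)) ->
     exists k c, forall z, x <= z <= y -> g z = c0 * powerRZ alpha k * z + c) ->
  forall x y, x < y -> c0 * (g y - g x) > 0.
Proof.
  intros Ha Hc H.
  assert (forall n x y, (cnt T x y <= n)%nat -> x < y -> c0 * (g y - g x) > 0).
  { induction n; intros x y Hn Hxy.
    - assert (Hno : forall t, In t T -> ~ (x < t < y)).
      { intros t Ht Hin. assert (Hf : In t (filter (fun t => if Rlt_dec x t then if Rlt_dec t y then true else false else false) T)).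
        { apply filter_In. split; auto. destruct (Rlt_dec x t); [|lra]. destruct (Rlt_dec t y); [auto|lra]. }
        unfold cnt in Hn. destruct (filter _ T); simpl in *; [easy|lia]. }
      destruct (H x y Hxy Hno) as [k [c Hk]].
      rewrite (Hk y) by lra. rewrite (Hk x) by lra.
      pose proof (powerRZ_lt alpha k Ha).
      replace (c0 * (c0 * powerRZ alpha k * y + c - (c0 * powerRZ alpha k * x + c))) with
        ((c0*c0) * powerRZ alpha k * (y - x)) by ring.
      apply Rmult_gt_0_compat; [apply Rmult_gt_0_compat|lra]; auto.
      assert (c0 * c0 > 0) by (destruct (Rtotal_order c0 0) as [?|[?|?]]; nra). lra.
    - destruct (classic (exists t, In t T /\ x < t < y)) as [[t [Ht Hin]]|Hno].
      + assert (Hx : (cnt T x t < cnt T x y)%nat).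
        { unfold cnt. apply filter_lt.
          - intros a. destruct (Rlt_dec x a); destruct (Rlt_dec a t); destruct (Rlt_dec a y); try lra; auto.
          - exists t. split; auto. destruct (Rlt_dec x t); [|lra]. destruct (Rlt_dec t y); [|lra]. destruct (Rlt_dec t t); [lra|auto]. }
        assert (Hy : (cnt T t y < cnt T x y)%nat).
        { unfold cnt. apply filter_lt.
          - intros a. destruct (Rlt_dec t a); destruct (Rlt_dec x a); destruct (Rlt_dec a y); try lra; auto.
          - exists t. split; auto. destruct (Rlt_dec x t); [|lra]. destruct (Rlt_dec t y); [|lra]. destruct (Rlt_dec t t); [lra|auto]. }
        pose proof (IHn x t ltac:(lia) ltac:(lra)). pose proof (IHn t y ltac:(lia) ltac:(lra)). lra.
      + apply (IHn x y); auto. unfold cnt.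
        replace (filter _ T) with (@nil R); simpl; [lia|].
        symmetry. apply filter_nil'.
        intros t Ht. destruct (Rlt_dec x t); destruct (Rlt_dec t y); auto. exfalso; apply Hno; eauto. }
  intros x y Hxy. exact (H0 _ x y (le_n _) Hxy).
Qed.
Lemma leaky_pos alpha u : alpha < 1 -> 0 <= u -> leaky alpha u = u.
Proof. intros. unfold leaky, Rmax. destruct (Rle_dec (alpha*u) u); nra. Qed.
Lemma leaky_neg alpha u : 0 < alpha < 1 -> u <= 0 -> leaky alpha u = alpha * u.
Proof. intros. unfold leaky, Rmax. destruct (Rle_dec (alpha*u) u); nra. Qed.

Lemma PLE_step alpha m g w b : 0 < alpha < 1 -> PLE alpha m g ->
  PLE alpha (S m) (fun x => w * leaky alpha (g x) + b).
Proof.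
  intros Ha [T [c0 [HT H]]].
  destruct (Req_dec c0 0) as [Hc0|Hc0].
  - exists T, (w*c0). split; [lia|]. intros x y Hxy Hno.
    destruct (H x y Hxy Hno) as [k [c Hk]]. exists 0%Z, (w * leaky alpha c + b).
    intros z Hz. rewrite Hk by auto. rewrite Hc0. simpl. replace (0 * powerRZ alpha k * z + c) with c by ring. ring.
  - assert (Hmono := mono alpha T c0 g ltac:(lra) Hc0 H).
    assert (Hgen : forall T', (forall t, In t T -> In t T') ->
       (forall x y, x < y -> (forall t, In t T' -> ~ (x < t < y)) ->
          forall k c, (forall z, x <= z <= y -> g z = c0 * powerRZ alpha k * z + c) ->
          ~ (x < - c / (c0 * powerRZ alpha k) < y)) ->
       (length T' <= S (length T))%nat ->
       PLE alpha (S m) (fun x => w * leaky alpha (g x) + b)).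
    { intros T' Hsub HZ Hlen. exists T', (w * c0). split; [lia|].
      intros x y Hxy Hno.
      destruct (H x y Hxy (fun t Ht => Hno t (Hsub t Ht))) as [k [c Hk]].
      pose proof (HZ x y Hxy Hno k c Hk) as Hz.
      set (s := c0 * powerRZ alpha k) in *.
      assert (Hp := powerRZ_lt alpha k ltac:(lra)).
      assert (Hs : s <> 0) by (unfold s; intro E; apply Rmult_integral in E; lra).
      set (zs := - c / s) in *.
      assert (Hlin : forall z, s * z + c = s * (z - zs)) by (intros; unfold zs; field; auto).
      assert (Hpk : powerRZ alpha (k+1) = alpha * powerRZ alpha k)
        by (rewrite powerRZ_add by lra; simpl; ring).
      assert (Hcase : (zs <= x /\ 0 < s) \/ (zs <= x /\ s < 0) \/ (y <= zs /\ 0 < s) \/ (y <= zs /\ s < 0)).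
      { destruct (Rlt_dec 0 s); destruct (Rle_dec zs x); try lra. }
      destruct Hcase as [[H1 H2]|[[H1 H2]|[[H1 H2]|[H1 H2]]]].
      + exists k, (w*c+b). intros z Hz'. rewrite Hk by auto. rewrite leaky_pos by (try lra; rewrite Hlin; nra).
        unfold s. ring.
      + exists (k+1)%Z, (w*alpha*c+b). intros z Hz'. rewrite Hk by auto. rewrite leaky_neg by (try lra; rewrite Hlin; nra).
        rewrite Hpk. unfold s. ring.
      + exists (k+1)%Z, (w*alpha*c+b). intros z Hz'. rewrite Hk by auto. rewrite leaky_neg by (try lra; rewrite Hlin; nra).
        rewrite Hpk. unfold s. ring.
      + exists k, (w*c+b). intros z Hz'. rewrite Hk by auto. rewrite leaky_pos by (try lra; rewrite Hlin; nra).
        unfold s. ring. }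
    destruct (classic (exists t, g t = 0)) as [[t Ht]|Hn].
    + apply (Hgen (t :: T)); [simpl; auto | | simpl; lia].
      intros x y Hxy Hno k c Hk Hin.
      assert (Hp := powerRZ_lt alpha k ltac:(lra)).
      assert (Hs : c0 * powerRZ alpha k <> 0) by (intro E; apply Rmult_integral in E; lra).
      assert (Hg0 : g (- c / (c0 * powerRZ alpha k)) = 0) by (rewrite Hk by lra; field; repeat split; lra).
      apply (Hno t (or_introl eq_refl)).
      destruct (Rtotal_order t (- c / (c0 * powerRZ alpha k))) as [Hl|[He|Hl]].
      * pose proof (Hmono _ _ Hl). rewrite Hg0, Ht in H0. lra.
      * rewrite He; auto.
      * pose proof (Hmono _ _ Hl). rewrite Hg0, Ht in H0. lra.
    + apply (Hgen T); [auto | | lia].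
      intros x y Hxy Hno k c Hk Hin.
      assert (Hp := powerRZ_lt alpha k ltac:(lra)).
      assert (Hs : c0 * powerRZ alpha k <> 0) by (intro E; apply Rmult_integral in E; lra).
      apply Hn. exists (- c / (c0 * powerRZ alpha k)). rewrite Hk by lra. field; repeat split; lra.
Qed.

Lemma PLE_net alpha w b L : 0 < alpha < 1 -> PLE alpha (L+1) (net alpha w b L).
Proof.
  intros Ha. induction L; simpl.
  - exists nil, (w O). split; [simpl; lia|]. intros x y _ _. exists 0%Z, (b O). intros z _. simpl. ring.
  - apply (PLE_step alpha (L+1) (net alpha w b L) (w (S L)) (b (S L)) Ha IHL).
Qed.
Fixpoint ins (t : R) (l : list R) : list R :=
  match l with
  | nil => t :: nil
  | a :: l' => if Rlt_dec t a then t :: l else if Req_EM_T t a then l else a :: ins t l'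
  end.
Fixpoint srt (T : list R) : list R :=
  match T with nil => nil | t :: T' => ins t (srt T') end.

Lemma ins_In t l x : In x (ins t l) <-> x = t \/ In x l.
Proof.
  induction l as [|a l IH]; simpl.
  - intuition.
  - destruct (Rlt_dec t a); [simpl; intuition|].
    destruct (Req_EM_T t a); [subst; simpl; intuition|]. simpl. rewrite IH. intuition.
Qed.
Lemma ins_len t l : (length (ins t l) <= S (length l))%nat.
Proof.
  induction l as [|a l IH]; simpl; auto.
  destruct (Rlt_dec t a); simpl; auto. destruct (Req_EM_T t a); simpl; lia.
Qed.
Lemma ins_sorted t l : StronglySorted Rlt l -> StronglySorted Rlt (ins t l).
Proof.
  induction l as [|a l IH]; simpl; intros H.
  - constructor; auto.
  - apply StronglySorted_inv in H as [H1 H2].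
    destruct (Rlt_dec t a).
    + constructor; [constructor; auto|]. constructor; auto.
      rewrite Forall_forall in *. intros x Hx. specialize (H2 x Hx). lra.
    + destruct (Req_EM_T t a); [constructor; auto|].
      constructor; auto. rewrite Forall_forall in *. intros x Hx. apply ins_In in Hx as [->|Hx]; auto. lra.
Qed.
Lemma srt_In T x : In x (srt T) <-> In x T.
Proof. induction T; simpl; [tauto|]. rewrite ins_In, IHT. intuition. Qed.
Lemma srt_len T : (length (srt T) <= length T)%nat.
Proof. induction T; simpl; auto. pose proof (ins_len a (srt T)). lia. Qed.
Lemma srt_sorted T : StronglySorted Rlt (srt T).
Proof. induction T; simpl; [constructor|]. apply ins_sorted; auto. Qed.

Lemma sorted_nth l : StronglySorted Rlt l -> forall i j, (i < j < length l)%nat -> nth i l 0 < nth j l 0.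
Proof.
  induction l as [|a l IH]; simpl; intros H i j Hij; [lia|].
  apply StronglySorted_inv in H as [H1 H2].
  destruct i, j; try lia.
  - rewrite Forall_forall in H2. apply H2. apply nth_In. lia.
  - apply IH; auto. lia.
Qed.
Lemma sorted_nth_le l : StronglySorted Rlt l -> forall i j, (i <= j < length l)%nat -> nth i l 0 <= nth j l 0.
Proof. intros H i j Hij. destruct (Nat.eq_dec i j); [subst; lra|]. apply Rlt_le, sorted_nth; auto; lia. Qed.

Lemma core (P : R -> Prop) (g : R -> R) alpha c0 a0 a1 :
  (forall x y z, P x -> P y -> x <= z <= y -> P z) -> a0 < a1 -> P a0 -> P a1 ->
  (forall x y, P x -> P y -> x < y -> exists k c, forall z, x <= z <= y -> g z = c0 * powerRZ alpha k * z + c) ->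
  exists k c, forall z, P z -> g z = c0 * powerRZ alpha k * z + c.
Proof.
  intros Hc Ha P0 P1 H.
  destruct (H a0 a1 P0 P1 Ha) as [k [c Hk]]. exists k, c. intros z Hz.
  assert (Px : P (Rmin z a0)) by (unfold Rmin; destruct (Rle_dec z a0); auto).
  assert (Py : P (Rmax z a1)) by (unfold Rmax; destruct (Rle_dec z a1); auto).
  assert (Hm1 : Rmin z a0 <= a0) by apply Rmin_r.
  assert (Hm2 : a1 <= Rmax z a1) by apply Rmax_r.
  assert (Hm3 : Rmin z a0 <= z) by apply Rmin_l.
  assert (Hm4 : z <= Rmax z a1) by apply Rmax_l.
  destruct (H _ _ Px Py ltac:(lra)) as [k' [c' Hk']].
  set (S := c0 * powerRZ alpha k) in *. set (S' := c0 * powerRZ alpha k') in *.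
  pose proof (Hk a0 ltac:(lra)). pose proof (Hk a1 ltac:(lra)).
  pose proof (Hk' a0 ltac:(lra)). pose proof (Hk' a1 ltac:(lra)).
  assert (E : (S' - S) * (a1 - a0) = 0) by lra.
  apply Rmult_integral in E as [E|E]; [|lra].
  assert (S' = S) by lra. assert (c' = c) by nra.
  rewrite Hk' by lra. subst. rewrite H4. reflexivity.
Qed.

Lemma PLE_final alpha m g : 0 < alpha -> continuity g -> PLE alpha m g -> alpha_power_PL_at_most alpha m g.
Proof.
  intros Ha Hg [T [c0 [HT H]]].
  set (bs := srt T).
  assert (Hso : StronglySorted Rlt bs) by apply srt_sorted.
  assert (Hpiece : forall i, exists p : R * R, (i <= length bs)%nat ->
     (exists k, fst p = c0 * powerRZ alpha k) /\ forall x, in_piece bs i x -> g x = fst p * x + snd p).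
  { intros i. destruct (Compare_dec.le_lt_dec i (length bs)) as [Hi|Hi];
      [|exists (0,0); intros; lia].
    assert (Hconv : forall x y z, in_piece bs i x -> in_piece bs i y -> x <= z <= y -> in_piece bs i z).
    { unfold in_piece. intros x y z [[?|?] [?|?]] [[?|?] [?|?]] ?; split; try (left; auto; fail); right; lra. }
    assert (Hint : forall x y, in_piece bs i x -> in_piece bs i y -> x < y ->
       exists k c, forall z, x <= z <= y -> g z = c0 * powerRZ alpha k * z + c).
    { intros x y Hx Hy Hxy. apply H; auto. intros t Ht Hin.
      apply (srt_In T t) in Ht. fold bs in Ht. apply In_nth with (d := 0) in Ht as [j [Hj Ej]].
      destruct Hx as [Hx _]. destruct Hy as [_ Hy].
      destruct (Compare_dec.lt_dec j i).
      - destruct Hx as [Hx|Hx]; [lia|].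
        pose proof (sorted_nth_le bs Hso j (i-1) ltac:(lia)). lra.
      - destruct Hy as [Hy|Hy]; [lia|].
        pose proof (sorted_nth_le bs Hso i j ltac:(lia)). lra. }
    assert (Htwo : exists a0 a1, a0 < a1 /\ in_piece bs i a0 /\ in_piece bs i a1).
    { unfold in_piece. destruct (length bs) eqn:El.
      - exists 0, 1. split; [lra|]. split; split; left; lia.
      - destruct i.
        + exists (nth 0 bs 0 - 1), (nth 0 bs 0). split; [lra|]. split; split; try (left; lia); right; lra.
        + destruct (Nat.eq_dec (S i) (S n)).
          * exists (nth i bs 0), (nth i bs 0 + 1). split; [lra|]. replace (S i - 1)%nat with i by lia.
            split; split; try (left; lia); right; lra.
          * exists (nth i bs 0), (nth (S i) bs 0). pose proof (sorted_nth bs Hso i (S i) ltac:(lia)).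
            replace (S i - 1)%nat with i by lia. split; [lra|].
            split; split; right; lra. }
    destruct Htwo as [a0 [a1 [H01 [P0 P1]]]].
    destruct (core _ g alpha c0 a0 a1 Hconv H01 P0 P1 Hint) as [k [c Hk]].
    exists (c0 * powerRZ alpha k, c). intros _. split; [exists k; reflexivity|]. exact Hk. }
  set (pf i := proj1_sig (constructive_indefinite_description _ (Hpiece i))).
  exists bs, (fun i => fst (pf i)), (fun i => snd (pf i)).
  split; [|split].
  - split; [exact Hg|split].
    + intros i Hi. apply sorted_nth; auto.
    + intros i x Hi Hx. unfold pf. destruct (constructive_indefinite_description _ (Hpiece i)) as [p Hp]. simpl.
      apply (proj2 (Hp Hi)). exact Hx.
  - pose proof (srt_len T). fold bs in H0. lia.
  - exists c0. intros i Hi. unfold pf. destruct (constructive_indefinite_description _ (Hpiece i)) as [p Hp]. simpl.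
    apply (proj1 (Hp Hi)).
Qed.

Theorem mainTheorem3 (alpha : R) (L : nat) (f : R -> R) :
  0 < alpha < 1 -> N1 alpha L f -> alpha_power_PL_at_most alpha (L + 1) f.
Proof.
  intros Ha [w [b Hf]].
  replace f with (net alpha w b L) by (symmetry; apply functional_extensionality_dep; exact Hf).
  apply PLE_final; [lra | apply cont_net | apply PLE_net; auto].
Qed.
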